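(* Let $\gamma>0$ or $\gamma<-1$, let $\theta\in\mathbb R^d$, and let $\mathcal X\subseteq\mathbb R^d$. For $x\in\mathcal X$, $y\in\{0,1\}$ define $$S_\gamma(x,y,\theta)=\Big[\frac{\exp\{(\gamma+1)y\,\theta^\top x\}}{1+\exp\{(\gamma+1)\theta^\top x\}}\Big]^{\frac{\gamma}{\gamma+1}}\Big\{y-\frac{\exp\{(\gamma+1)\theta^\top x\}}{1+\exp\{(\gamma+1)\theta^\top x\}}\Big\}x.$$ Let $Q$ be an arbitrary conditional distribution of $Y\in\{0,1\}$ given $X=x$, with conditional probability mass function $q(y|x)$ (not necessarily belonging to the logistic model). Then $$\sup_{x\in\mathcal X}\big|\theta^\top\,\mathbb E_Q[S_\gamma(X,Y,\theta)\mid X=x]\big|<\infty .$$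
   Context: $S_\gamma$ is the $\gamma$-estimating score for the binary logistic model $p(y|x,\theta)=\exp(y\theta^\top x)/(1+\exp(\theta^\top x))$, $y\in\{0,1\}$. $\mathbb E_Q[\cdot\mid X=x]=\sum_{y\in\{0,1\}}(\cdot)\,q(y|x)$. *)

(* Defs.v *)
From HB Require Import structures.
From mathcomp Require Import all_boot all_order all_algebra.
From mathcomp Require Import all_classical all_reals all_analysis.
Set Implicit Arguments. Unset Strict Implicit. Unset Printing Implicit Defensive.
Import Order.TTheory GRing.Theory Num.Theory.
Local Open Scope ring_scope.

Definition dotv (R : realType) (d : nat) (u v : 'rV[R]_d) : R :=
  \sum_(i < d) u 0 i * v 0 i.

Definition S_gamma (R : realType) (d : nat) (gamma : R)
    (x : 'rV[R]_d) (y : bool) (theta : 'rV[R]_d) : 'rV[R]_d :=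
  let t := dotv theta x in
  let e := expR ((gamma + 1) * t) in
  ((expR ((gamma + 1) * (y%:R) * t) / (1 + e)) `^ (gamma / (gamma + 1)) *
   (y%:R - e / (1 + e))) *: x.

(* E_Q[S_gamma(X,Y,theta) | X = x] = sum_y S_gamma(x,y,theta) q(y|x) *)
Definition condExpS (R : realType) (d : nat) (gamma : R)
    (q : 'rV[R]_d -> bool -> R) (x : 'rV[R]_d) (theta : 'rV[R]_d) : 'rV[R]_d :=
  \sum_(y : bool) q x y *: S_gamma gamma x y theta.

(* Main.v *)
Require Import Defs.
From HB Require Import structures.
From mathcomp Require Import all_boot all_order all_algebra.
From mathcomp Require Import all_classical all_reals all_analysis.
From mathcomp Require Import ring lra.
Import Order.TTheory GRing.Theory Num.Theory.
Local Open Scope classical_set_scope.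
Local Open Scope ring_scope.

Lemma key (R : realType) (a s : R) : 0 < a ->
  `|s| * (1 / (1 + expR s)) * ((expR s / (1 + expR s)) `^ a) <= 1 + a^-1.
Proof.
move=> ha.
set E := expR s.
have hE : 0 < E by apply: expR_gt0.
set P := E / (1 + E).
have hP : 0 < P by apply: divr_gt0 => //; lra.
have hP1 : P <= 1 by rewrite ler_pdivrMr; lra.
have hPE : P <= E by rewrite ler_pdivrMr; nra.
have hpow : P `^ a = expR (a * ln P) by rewrite /powR gt_eqF.
have hlnP0 : ln P <= 0 by apply: ln_le0.
have hlnPs : ln P <= s.
  rewrite -[s in _ <= s]expRK; rewrite ler_ln ?posrE //; exact: expR_gt0.
have hQ : 0 < 1 / (1 + E) by apply: divr_gt0 => //; lra.
have hQ1 : 1 / (1 + E) <= 1 by rewrite ler_pdivrMr; lra.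
have hQE : (1 / (1 + E)) * E <= 1 by rewrite mulrC mulrA ler_pdivrMr; lra.
rewrite hpow.
have hainv : 0 < a^-1 by rewrite invr_gt0.
have ha1 : a * a^-1 = 1 by rewrite divff // gt_eqF.
have hX0 : 0 < expR (a * ln P) by apply: expR_gt0.
case: (lerP 0 s) => hs.
- rewrite ger0_norm //.
  have hX1 : expR (a * ln P) <= 1.
    rewrite -expR0 ler_expR; nra.
  have hsE : 1 + s <= E by apply: expR_ge1Dx.
  (* s * Q <= 1 since s <= E and Q*E <= 1 *)
  have : s * (1 / (1 + E)) <= 1 by nra.
  nra.
- rewrite ltr0_norm //.
  have hX : expR (a * ln P) <= expR (a * s) by rewrite ler_expR; nra.
  have h1 := expR_ge1Dx (- (a * s)).
  have h2 := expRxMexpNx_1 (a * s).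
  have h3 : - s * expR (a * s) <= a^-1.
    have : (- (a * s)) * expR (a * s) <= 1 by nra.
    move=> h; have : a * (- s * expR (a * s)) <= a * a^-1 by rewrite ha1; nra.
    by rewrite ler_pM2l.
  have h4 : - s * expR (a * ln P) <= - s * expR (a * s) by rewrite ler_pM2l; lra.
  have h5 : - s * (1 / (1 + E)) * expR (a * ln P) <= - s * expR (a * ln P).
    rewrite -mulrA ler_pM2l; last lra.
    nra.
  lra.
Qed.

Lemma dotvD (R : realType) (d : nat) (u v w : 'rV[R]_d) :
  dotv u (v + w) = dotv u v + dotv u w.
Proof. by rewrite /dotv -big_split /=; apply: eq_bigr => i _; rewrite mxE mulrDr. Qed.

Lemma dotvZ (R : realType) (d : nat) (u v : 'rV[R]_d) (c : R) :
  dotv u (c *: v) = c * dotv u v.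
Proof. by rewrite /dotv mulr_sumr; apply: eq_bigr => i _; rewrite mxE mulrCA. Qed.

Lemma key2 (R : realType) (g a s : R) : 0 < a -> g != 0 ->
  `|s / g| * (1 / (1 + expR s)) * ((expR s / (1 + expR s)) `^ a) <= (1 + a^-1) / `|g|.
Proof.
move=> ha hg.
rewrite normrM normrV ?unitfE // -mulrA mulrAC mulrA ler_pM2r; last first.
  by rewrite invr_gt0 normr_gt0.
exact: key.
Qed.

Theorem mainTheorem7 (R : realType) (d : nat) (gamma : R)
    (hgamma : 0 < gamma \/ gamma < -1)
    (theta : 'rV[R]_d) (X : set 'rV[R]_d)
    (q : 'rV[R]_d -> bool -> R)
    (hq0 : forall x, X x -> forall y, 0 <= q x y)
    (hq1 : forall x, X x -> q x false + q x true = 1) :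
  exists M : R, forall x, X x ->
    `| dotv theta (condExpS gamma q x theta) | <= M.
Proof.
set g := gamma + 1.
set a := gamma / g.
have hg : g != 0 by rewrite /g; case: hgamma => h; apply/eqP; lra.
have ha : 0 < a.
  rewrite /a /g; case: hgamma => h.
    apply: divr_gt0; lra.
  rewrite -mulrNN -invrN; apply: divr_gt0; lra.
pose K := (1 + a^-1) / `|g|.
exists K => x Xx.
rewrite /condExpS big_bool /= dotvD.
rewrite (dotvZ _ _ theta _ (q x true)) (dotvZ _ _ theta _ (q x false)) /S_gamma.
rewrite !(dotvZ _ _ theta x) -/g.
set t := dotv theta x.
set s := g * t.
have ht : t = s / g by rewrite /s mulrAC divff // mul1r.
have hE : 0 < expR s by apply: expR_gt0.
have hT1 : `|(expR (g * true%:R * t) / (1 + expR s)) `^ (gamma / g) *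
          (true%:R - expR s / (1 + expR s)) * t| <= K.
  rewrite (_ : true%:R = 1 :> R) //.
  rewrite mulr1 -/s -/a [in X in X <= _]ht.
  rewrite (_ : 1%:R - expR s / (1 + expR s) = 1 / (1 + expR s)); last first.
    by field; apply/eqP; lra.
  rewrite normrM normrM (ger0_norm (powR_ge0 _ _)) ger0_norm; last first.
    apply: divr_ge0; lra.
  rewrite [X in X <= _]mulrC mulrA mulrAC.
  exact: key2.
have hT0 : `|(expR (g * false%:R * t) / (1 + expR s)) `^ (gamma / g) *
          (false%:R - expR s / (1 + expR s)) * t| <= K.
  rewrite (_ : false%:R = 0 :> R) //.
  rewrite mulr0 mul0r expR0 sub0r -/a mulrN mulNr normrN.
  have hN : expR (- s) = (expR s)^-1 by rewrite expRN.
  rewrite (_ : 1 / (1 + expR s) = expR (- s) / (1 + expR (- s))); last first.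
    by rewrite hN; field; apply/andP; split; apply/eqP; lra.
  rewrite (_ : expR s / (1 + expR s) = 1 / (1 + expR (- s))); last first.
    by rewrite hN; field; apply/andP; split; apply/eqP; lra.
  rewrite normrM normrM (ger0_norm (powR_ge0 _ _)) ger0_norm; last first.
    apply: divr_ge0; first lra. have := expR_gt0 (- s); lra.
  rewrite [X in X <= _]mulrC mulrA mulrAC.
  have -> : `|t| = `|- s / g| by rewrite ht mulNr normrN.
  exact: key2.
have q0 := hq0 x Xx false.
have q1 := hq0 x Xx true.
have qs := hq1 x Xx.
set T1 := (X in q x true * X) in hT1 *.
set T0 := (X in q x false * X) in hT0 *.
apply: le_trans (ler_normD _ _) _.
rewrite (normrM (q x true)) (normrM (q x false)) (ger0_norm q0) (ger0_norm q1).
have : q x true * `|T1| <= q x true * K by rewrite ler_wpM2l.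
have : q x false * `|T0| <= q x false * K by rewrite ler_wpM2l.
have : q x true * K + q x false * K = K by rewrite -mulrDl addrC qs mul1r.
lra.
Qed.
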